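(* Let $\mathcal D$ be a $k$-oriented Spherical Diagram and $H$ an attractor hull of $\mathcal D$. If an arc of $\mathcal D$ intersects the interior of $H$, then it intersects the boundary of $H$ in at most one point.
   Context: A geodesic arc on the unit sphere in $\mathbb R^3$ is the unique shortest curve joining two non-antipodal points. An arc $a$ blocks an arc $b$ (equivalently, $b$ hits $a$) if an endpoint of $b$ lies in the relative interior of $a$. A Spherical Diagram (SD) is a finite non-empty collection $\mathcal D$ of pairwise interior-disjoint geodesic arcs on the unit sphere such that each arc of $\mathcal D$ is blocked by arcs of $\mathcal D$ at each of its endpoints. An SD $\mathcal D$ is $k$-oriented if there exist a set $P$ of $k$ points on the unit sphere (poles), no two antipodal, and a function $f\colon\mathcal D\to P$ such that each arc $a\in\mathcal D$ lies on a great circle through $f(a)$ but contains neither $f(a)$ nor its antipode $-f(a)$ (the anti-pole of $f(a)$). An attractor of a $k$-oriented SD is a set of $k$ points, no two antipodal, chosen among its poles and anti-poles. An attractor hull is the spherical convex hull of an attractor (the whole sphere if the attractor is not contained in any open hemisphere). ''Intersect'' means ''have non-empty intersection''. *)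

(* Defs.v *)
From HB Require Import structures.
From mathcomp Require Import all_boot all_order all_algebra.
From mathcomp Require Import reals.
Set Implicit Arguments. Unset Strict Implicit. Unset Printing Implicit Defensive.
Import Order.TTheory GRing.Theory Num.Theory.
Local Open Scope ring_scope.

Section SphereDefs.
Variable R : realType.

Definition pt := 'rV[R]_3.

Definition dot (u v : pt) : R := \sum_(i < 3) u 0 i * v 0 i.

Definition on_sphere (x : pt) : Prop := dot x x = 1.

Definition dist2 (x y : pt) : R := dot (x - y) (x - y).

(* A geodesic arc is given by its two endpoints, which are distinct,
   non-antipodal points of the sphere. *)
Definition arc_ok (p q : pt) : Prop :=
  [/\ on_sphere p, on_sphere q, p <> q & p <> - q].

Definition garc (p q : pt) (x : pt) : Prop :=
  on_sphere x /\ exists a b : R, [/\ 0 <= a, 0 <= b & x = a *: p + b *: q].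

Definition arc_relint (p q : pt) (x : pt) : Prop :=
  on_sphere x /\ exists a b : R, [/\ 0 < a, 0 < b & x = a *: p + b *: q].

Definition spherical_diagram (I : finType) (ends : I -> pt * pt) : Prop :=
  [/\ (0 < #|I|)%N,
      (forall i, arc_ok (ends i).1 (ends i).2),
      (forall i j, i <> j -> forall x,
          arc_relint (ends i).1 (ends i).2 x ->
          ~ arc_relint (ends j).1 (ends j).2 x) &
      (* each arc is blocked at each of its endpoints *)
      (forall i,
          (exists j, arc_relint (ends j).1 (ends j).2 (ends i).1) /\
          (exists j, arc_relint (ends j).1 (ends j).2 (ends i).2))].

(* The poles P (k points, distinct, no two antipodal) together with the
   assignment f witness that the diagram is k-oriented. *)
Definition orientation (I : finType) (ends : I -> pt * pt) (k : nat)
    (P : 'I_k -> pt) (f : I -> 'I_k) : Prop :=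
  [/\ (forall i, on_sphere (P i)),
      injective P,
      (forall i j, P i <> - P j) &
      (forall a : I,
        [/\ (* the arc lies on a great circle through the pole f a *)
            (exists n : pt, [/\ n != 0, dot n (P (f a)) = 0,
                                dot n (ends a).1 = 0 & dot n (ends a).2 = 0]),
            ~ garc (ends a).1 (ends a).2 (P (f a)) &
            ~ garc (ends a).1 (ends a).2 (- P (f a))])].

Definition attractor (k : nat) (P : 'I_k -> pt) (A : 'I_k -> pt) : Prop :=
  [/\ injective A,
      (forall j, exists i, A j = P i \/ A j = - P i) &
      (forall i j, A i <> - A j)].

Definition in_open_hemisphere (k : nat) (A : 'I_k -> pt) : Prop :=
  exists v : pt, on_sphere v /\ forall j, 0 < dot v (A j).

(* spherical convex hull of A: the points of the sphere lying in the convex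
   cone spanned by A, or the whole sphere if A is not contained in any open
   hemisphere *)
Definition attractor_hull (k : nat) (A : 'I_k -> pt) (x : pt) : Prop :=
  on_sphere x /\
  (in_open_hemisphere A ->
     exists lam : 'I_k -> R, (forall j, 0 <= lam j) /\
                             x = \sum_(j < k) lam j *: A j).

Definition sph_interior (H : pt -> Prop) (x : pt) : Prop :=
  on_sphere x /\ H x /\
  exists e : R, 0 < e /\ forall y, on_sphere y -> dist2 y x < e -> H y.

Definition sph_closure (H : pt -> Prop) (x : pt) : Prop :=
  on_sphere x /\ forall e : R, 0 < e -> exists y, H y /\ dist2 y x < e.

Definition sph_boundary (H : pt -> Prop) (x : pt) : Prop :=
  sph_closure H x /\ ~ sph_interior H x.

End SphereDefs.

(* Main.v *)
Require Import Defs.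
From HB Require Import structures.
From mathcomp Require Import all_boot all_order all_algebra.
From mathcomp Require Import reals.
From mathcomp Require Import ring lra.
From Stdlib Require Import Classical_Prop.
Import Order.TTheory GRing.Theory Num.Theory.
Local Open Scope ring_scope.

Section Aux.
Variable R : realType.
Implicit Types u v w : pt R.

Definition i0 : 'I_3 := @Ordinal 3 0 isT.
Definition i1 : 'I_3 := @Ordinal 3 1 isT.
Definition i2 : 'I_3 := @Ordinal 3 2 isT.

Lemma dot3 u v : dot u v = u 0 i0 * v 0 i0 + u 0 i1 * v 0 i1 + u 0 i2 * v 0 i2.
Proof.
rewrite /dot !big_ord_recr big_ord0 /= add0r.
by congr (_ * _ + _ * _ + _ * _); congr (_ _ _); apply: val_inj.
Qed.

Lemma row3P u v : u 0 i0 = v 0 i0 -> u 0 i1 = v 0 i1 -> u 0 i2 = v 0 i2 -> u = v.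
Proof.
move=> h0 h1 h2; apply/rowP => i.
case: i => [[|[|[|//]]] Hi].
- by rewrite (_ : Ordinal Hi = i0) //; apply: val_inj.
- by rewrite (_ : Ordinal Hi = i1) //; apply: val_inj.
- by rewrite (_ : Ordinal Hi = i2) //; apply: val_inj.
Qed.

Ltac comp := rewrite ?dot3 !mxE /=.

Lemma dotC u v : dot u v = dot v u.
Proof. rewrite !dot3; ring. Qed.
Lemma dotDl u v w : dot (u + v) w = dot u w + dot v w.
Proof. rewrite !dot3 !mxE; ring. Qed.
Lemma dotDr u v w : dot w (u + v) = dot w u + dot w v.
Proof. rewrite !dot3 !mxE; ring. Qed.
Lemma dotNl u v : dot (- u) v = - dot u v.
Proof. rewrite !dot3 !mxE; ring. Qed.
Lemma dotNr u v : dot v (- u) = - dot v u.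
Proof. rewrite !dot3 !mxE; ring. Qed.
Lemma dotBl u v w : dot (u - v) w = dot u w - dot v w.
Proof. rewrite !dot3 !mxE; ring. Qed.
Lemma dotBr u v w : dot w (u - v) = dot w u - dot w v.
Proof. rewrite !dot3 !mxE; ring. Qed.
Lemma dotZl (r : R) u v : dot (r *: u) v = r * dot u v.
Proof. rewrite !dot3 !mxE; ring. Qed.
Lemma dotZr (r : R) u v : dot v (r *: u) = r * dot v u.
Proof. rewrite !dot3 !mxE; ring. Qed.
Lemma dot0l v : dot 0 v = 0.
Proof. rewrite !dot3 !mxE; ring. Qed.
Lemma dot_ge0 v : 0 <= dot v v.
Proof. by rewrite dot3 -!expr2 !addr_ge0 ?sqr_ge0. Qed.
Lemma dot_eq0 v : dot v v = 0 -> v = 0.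
Proof.
rewrite dot3 => h.
have h0 : v 0 i0 = 0 by nra.
have h1 : v 0 i1 = 0 by nra.
have h2 : v 0 i2 = 0 by nra.
by apply: row3P; rewrite mxE.
Qed.
Lemma CS u v : dot u v ^+ 2 <= dot u u * dot v v.
Proof.
rewrite !dot3.
set a0 := u 0 i0; set a1 := u 0 i1; set a2 := u 0 i2.
set b0 := v 0 i0; set b1 := v 0 i1; set b2 := v 0 i2.
have -> : (a0 * a0 + a1 * a1 + a2 * a2) * (b0 * b0 + b1 * b1 + b2 * b2) =
  (a0 * b0 + a1 * b1 + a2 * b2) ^+ 2 + ((a0 * b1 - a1 * b0) ^+ 2 + (a1 * b2 - a2 * b1) ^+ 2
   + (a0 * b2 - a2 * b0) ^+ 2) by ring.
by rewrite lerDl !addr_ge0 ?sqr_ge0.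
Qed.

Definition crs (p q : pt R) : pt R := \row_(i < 3)
  (if i == i0 then p 0 i1 * q 0 i2 - p 0 i2 * q 0 i1
   else if i == i1 then p 0 i2 * q 0 i0 - p 0 i0 * q 0 i2
   else p 0 i0 * q 0 i1 - p 0 i1 * q 0 i0).

Lemma crs_ident p q r :
  (dot p p * dot q q - dot p q ^+ 2) *: r =
  (dot r p * dot q q - dot r q * dot p q) *: p + (dot r q * dot p p - dot r p * dot p q) *: q
  + dot r (crs p q) *: crs p q.
Proof. apply: row3P; rewrite !dot3 !mxE /=; ring. Qed.

Lemma plane p q n c : dot p p = 1 -> dot q q = 1 -> dot p q ^+ 2 < 1 -> n != 0 ->
  dot n p = 0 -> dot n q = 0 -> dot n c = 0 -> exists g d : R, c = g *: p + d *: q.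
Proof.
move=> hp hq hpq hn np nq nc.
set G := 1 - dot p q ^+ 2.
have G0 : G != 0 by rewrite /G subr_eq0 eq_sym lt_eqF.
have idn := crs_ident p q n; have idc := crs_ident p q c.
rewrite hp hq mul1r np nq !mul0r subrr !scale0r !add0r in idn.
rewrite hp hq !mul1r !mulr1 in idc.
have e1 : G * dot n c = dot n (crs p q) * dot (crs p q) c.
  by rewrite -(dotZl G n c) /G idn dotZl.
rewrite nc mulr0 in e1.
have wc : dot c (crs p q) = 0.
  case: (eqVneq (dot n (crs p q)) 0) => h.
    move: idn; rewrite h scale0r => /eqP; rewrite scaler_eq0 (negbTE G0) /=.
    by rewrite (negbTE hn).
  by rewrite dotC; apply/eqP; move/eqP: e1; rewrite eq_sym mulf_eq0 (negbTE h).
rewrite wc scale0r addr0 in idc.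
exists (G^-1 * (dot c p - dot c q * dot p q)), (G^-1 * (dot c q - dot c p * dot p q)).
by rewrite -!scalerA -scalerDr -idc scalerA mulVf // scale1r.
Qed.

Definition betw (a1 b1 g d a3 b3 : R) :=
  exists s t : R, [/\ 0 <= s, 0 < t, a1 = s * g + t * a3 & b1 = s * d + t * b3].

Lemma betw_intro (a1 b1 g d a3 b3 : R) :
  0 <= a1 * b3 - b1 * a3 -> 0 < g * b3 - d * a3 -> 0 < g * b1 - d * a1 ->
  betw a1 b1 g d a3 b3.
Proof.
move=> h1 h2 h3.
exists ((a1 * b3 - b1 * a3) / (g * b3 - d * a3)), ((g * b1 - d * a1) / (g * b3 - d * a3)).
have D0 : g * b3 - d * a3 != 0 by rewrite gt_eqF.
split; [by rewrite divr_ge0 // ltW | by rewrite divr_gt0 | field => // | field => //].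
Qed.

Lemma two_d (g d a1 b1 a2 b2 a3 b3 : R) : 0 < g -> d < 0 ->
  0 <= a1 -> 0 <= b1 -> 0 <= a2 -> 0 <= b2 -> 0 <= a3 -> 0 <= b3 ->
  0 < a1 + b1 -> 0 < a2 + b2 -> 0 < a3 + b3 ->
  [\/ betw a1 b1 g d a3 b3, betw a2 b2 g d a3 b3, betw a1 b1 a2 b2 a3 b3 |
      betw a2 b2 a1 b1 a3 b3 \/ a1 * b2 = b1 * a2].
Proof.
move=> hg hd ha1 hb1 ha2 hb2 ha3 hb3 n1 n2 n3.
have pos : forall a b : R, 0 <= a -> 0 <= b -> 0 < a + b -> 0 < g * b - d * a.
  move=> a b ha hb hab.
  case: (ltrP 0 b) => hb'; first by nra.
  have -> : b = 0 by apply/eqP; rewrite eq_le hb' hb.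
  nra.
case: (lerP 0 (a1 * b3 - b1 * a3)) => hx.
  by apply: Or41; apply: betw_intro => //; apply: pos.
case: (lerP 0 (a2 * b3 - b2 * a3)) => hy.
  by apply: Or42; apply: betw_intro => //; apply: pos.
case: (ltrgtP (a1 * b2 - b1 * a2) 0) => hxy.
- apply: Or44; left.
  exists ((- (a2 * b3 - b2 * a3)) / (- (a1 * b3 - b1 * a3))),
         ((- (a1 * b2 - b1 * a2)) / (- (a1 * b3 - b1 * a3))).
  have D0 : a1 * b3 - b1 * a3 != 0 by rewrite lt_eqF.
  split; [apply: ltW; apply: divr_gt0; lra | apply: divr_gt0; lra | field => // | field => //].
- apply: Or43.
  exists ((- (a1 * b3 - b1 * a3)) / (- (a2 * b3 - b2 * a3))),
         ((a1 * b2 - b1 * a2) / (- (a2 * b3 - b2 * a3))).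
  have D0 : a2 * b3 - b2 * a3 != 0 by rewrite lt_eqF.
  split; [apply: ltW; apply: divr_gt0; lra | apply: divr_gt0; lra | field => // | field => //].
- by apply: Or44; right; apply/eqP; rewrite -subr_eq0 hxy.
Qed.

Lemma dist2E u v : dist2 u v = dot u u - 2 * dot u v + dot v v.
Proof. rewrite /dist2 !dot3 !mxE; ring. Qed.

Lemma dist2_sym u v : dist2 u v = dist2 v u.
Proof. rewrite !dist2E (dotC u v); ring. Qed.

Lemma dist2_ge0 u v : 0 <= dist2 u v.
Proof. exact: dot_ge0. Qed.

Lemma dist2xx u : dist2 u u = 0.
Proof. by rewrite /dist2 subrr dot0l. Qed.

Lemma dot_sub_le u v : dot (u - v) (u - v) <= 2 * dot u u + 2 * dot v v.
Proof.
have := dot_ge0 (u + v).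
rewrite !dotDl !dotDr ?dotNl ?dotNr ?opprK (dotC v u); lra.
Qed.

Variable k : nat.
Variable A : 'I_k -> pt R.

Definition cone (x : pt R) := exists lam : 'I_k -> R, (forall j, 0 <= lam j) /\
                             x = \sum_(j < k) lam j *: A j.

Lemma coneD x y : cone x -> cone y -> cone (x + y).
Proof.
move=> [l [hl ->]] [m [hm ->]]; exists (fun j => l j + m j); split.
  by move=> j; rewrite addr_ge0.
by rewrite -big_split /=; apply: eq_bigr => j _; rewrite scalerDl.
Qed.

Lemma coneZ (r : R) x : 0 <= r -> cone x -> cone (r *: x).
Proof.
move=> hr [l [hl ->]]; exists (fun j => r * l j); split.
  by move=> j; rewrite mulr_ge0.
by rewrite scaler_sumr; apply: eq_bigr => j _; rewrite scalerA.
Qed.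

Lemma hullE (hv : in_open_hemisphere A) x : attractor_hull A x <-> on_sphere x /\ cone x.
Proof.
split; first by move=> [h1 h2]; split => //; apply: h2.
by move=> [h1 h2]; split.
Qed.

Lemma near_cone (hv : in_open_hemisphere A) w e : on_sphere w -> 0 < e ->
  (forall y, on_sphere y -> dist2 y w < e -> attractor_hull A y) ->
  forall u, dist2 u w < e / 2 -> dist2 u w < 1 / 4 -> cone u.
Proof.
rewrite /on_sphere => hw he hint u hd1 hd2.
have ee := dist2E u w; rewrite hw in ee.
set N := Num.sqrt (dot u u).
have N0 : 0 <= N by apply: sqrtr_ge0.
have NN : N ^+ 2 = dot u u by rewrite sqr_sqrtr // dot_ge0.
have cs := CS u w; rewrite hw mulr1 -NN in cs.
have uwN : dot u w <= N by nra.
have Nh : 1 / 2 < N by nra.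
have Nnz : N != 0 by rewrite gt_eqF //; lra.
set u' := N^-1 *: u.
have hu' : on_sphere u'.
  by rewrite /on_sphere /u' dotZl dotZr -NN; field.
have hd : dist2 u' w < e.
  rewrite dist2E hu' hw /u' dotZl.
  have NiN : N^-1 * N = 1 by rewrite mulVf.
  have Ni0 : 0 < N^-1 by rewrite invr_gt0; lra.
  have h1 : e / 2 < e * N by nra.
  have h2 : 0 <= (N - 1) ^+ 2 by apply: sqr_ge0.
  rewrite -NN in ee.
  have : 2 * N - 2 * dot u w < e * N.
    move: h2; rewrite (_ : (N - 1) ^+ 2 = N ^+ 2 - 2 * N + 1); last by ring.
    lra.
  move=> h.
  have : N^-1 * (2 * N - 2 * dot u w) < N^-1 * (e * N) by rewrite ltr_pM2l.
  have E1 : N^-1 * (2 * N - 2 * dot u w) = 2 - 2 * (N^-1 * dot u w) by field.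
  have E2 : N^-1 * (e * N) = e by field.
  rewrite E1 E2; lra.
have [_ cu'] := (hullE hv u').1 (hint u' hu' hd).
have -> : u = N *: u' by rewrite /u' scalerA mulfV // scale1r.
exact: coneZ.
Qed.

Lemma mix_int (hv : in_open_hemisphere A) a w x s t :
  sph_closure (attractor_hull A) a -> sph_interior (attractor_hull A) w ->
  on_sphere x -> 0 <= s -> 0 < t -> x = s *: a + t *: w ->
  sph_interior (attractor_hull A) x.
Proof.
move=> [ha hcl] [hw [_ [e [he hint]]]] hx hs ht xE.
set e1 := Num.min (e / 2) (1 / 4).
have e10 : 0 < e1 by rewrite /e1 lt_min; apply/andP; split; lra.
have e1a : e1 <= e / 2 by rewrite /e1 ge_min lexx.
have e1b : e1 <= 1 / 4 by rewrite /e1 ge_min lexx orbT.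
set del := e1 * t ^+ 2 / 4.
have del0 : 0 < del by rewrite /del; apply: divr_gt0 => //; apply: mulr_gt0 => //; apply: exprn_gt0.
suff main : forall y, on_sphere y -> dist2 y x < del -> attractor_hull A y.
  split => //; split; first by apply: main => //; rewrite dist2xx.
  by exists del; split.
move=> y hy hyx.
set eps := e1 * t ^+ 2 / (4 * (s ^+ 2 + 1)).
have eps0 : 0 < eps.
  rewrite /eps; apply: divr_gt0; first by apply: mulr_gt0 => //; apply: exprn_gt0.
  by apply: mulr_gt0 => //; apply: ltr_wpDl => //; apply: sqr_ge0.
have [a' [ha' ha'a]] := hcl eps eps0.
have [_ ca'] := (hullE hv a').1 ha'.
set u := t^-1 *: (y - s *: a').
have tnz : t != 0 by rewrite gt_eqF.
have yE : y = s *: a' + t *: u by rewrite /u scalerA mulfV // scale1r addrC subrK.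
apply/(hullE hv); split => //; rewrite yE.
apply: coneD; first exact: coneZ.
apply: coneZ; first exact: ltW.
have uw : u - w = t^-1 *: ((y - x) - s *: (a' - a)).
  by apply: row3P; rewrite xE !mxE; field.
have d2 : dist2 u w = t^-1 ^+ 2 * dot ((y - x) - s *: (a' - a)) ((y - x) - s *: (a' - a)).
  by rewrite /dist2 uw dotZl dotZr mulrA expr2.
have b1 := dot_sub_le (y - x) (s *: (a' - a)).
rewrite dotZl dotZr in b1.
have hyx' : dot (y - x) (y - x) < del by [].
have ha'a' : dot (a' - a) (a' - a) < eps by [].
have key : dot ((y - x) - s *: (a' - a)) ((y - x) - s *: (a' - a)) < e1 * t ^+ 2.
  have sq : s * (s * dot (a' - a) (a' - a)) <= e1 * t ^+ 2 / 4.
    have h0 := dot_ge0 (a' - a).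
    have : s ^+ 2 * dot (a' - a) (a' - a) <= s ^+ 2 * eps.
      by rewrite ler_wpM2l ?sqr_ge0 // ltW.
    have : s ^+ 2 * eps <= e1 * t ^+ 2 / 4.
      rewrite /eps mulrA (mulrC (s ^+ 2)) -mulrA ler_pdivrMr; last first.
        by apply: mulr_gt0 => //; apply: ltr_wpDl => //; apply: sqr_ge0.
      have et : 0 < e1 * t ^+ 2 by apply: mulr_gt0 => //; apply: exprn_gt0.
      rewrite mulrA. 
      have s2 := sqr_ge0 s.
      rewrite -mulrA mulrC; nra.
    rewrite expr2 mulrA; lra.
  rewrite /del in hyx'; lra.
have ti : 0 < t^-1 ^+ 2 by apply: exprn_gt0; rewrite invr_gt0.
apply: (@near_cone hv w e hw he hint).
- rewrite d2; apply: (@lt_le_trans _ _ e1) => //.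
  have : t^-1 ^+ 2 * dot ((y - x) - s *: (a' - a)) ((y - x) - s *: (a' - a)) < t^-1 ^+ 2 * (e1 * t ^+ 2).
    by rewrite ltr_pM2l.
  suff -> : t^-1 ^+ 2 * (e1 * t ^+ 2) = e1 by [].
  by field.
- rewrite d2; apply: (@lt_le_trans _ _ e1) => //.
  have : t^-1 ^+ 2 * dot ((y - x) - s *: (a' - a)) ((y - x) - s *: (a' - a)) < t^-1 ^+ 2 * (e1 * t ^+ 2).
    by rewrite ltr_pM2l.
  suff -> : t^-1 ^+ 2 * (e1 * t ^+ 2) = e1 by [].
  by field.
Qed.

Lemma hull_pt (hv : in_open_hemisphere A) j : on_sphere (A j) -> attractor_hull A (A j).
Proof.
move=> hj; apply/(hullE hv); split => //.
exists (fun i => if i == j then 1 else 0); split; first by move=> i; case: (i == j).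
rewrite (bigD1 j) //= eqxx scale1r big1 ?addr0 // => i /negbTE ->; by rewrite scale0r.
Qed.

Lemma closure_of_hull (H : pt R -> Prop) c : on_sphere c -> H c -> sph_closure H c.
Proof. by move=> hc Hc; split => // e he; exists c; rewrite dist2xx. Qed.

Lemma scale_unit (l : R) x : 0 <= l -> on_sphere x -> on_sphere (l *: x) -> l *: x = x.
Proof.
rewrite /on_sphere dotZl dotZr => hl hx; rewrite hx mulr1 => h.
have -> : l = 1 by nra.
by rewrite scale1r.
Qed.

Lemma par_eq (p q x y : pt R) (a1 b1 a2 b2 : R) :
  0 <= a1 -> 0 <= b1 -> 0 <= a2 -> 0 <= b2 -> 0 < a1 + b1 ->
  x = a1 *: p + b1 *: q -> y = a2 *: p + b2 *: q -> on_sphere x -> on_sphere y ->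
  a1 * b2 = b1 * a2 -> x = y.
Proof.
move=> h1 h2 h3 h4 h5 xE yE hx hy e.
case: (ltrP 0 a1) => ha.
  have ha0 : a1 != 0 by rewrite gt_eqF.
  have yx : y = (a2 / a1) *: x.
    rewrite yE xE; apply: row3P; rewrite !mxE.
    - have -> : b2 = b1 * a2 / a1 by rewrite -e; field.
      by field.
    - have -> : b2 = b1 * a2 / a1 by rewrite -e; field.
      by field.
    - have -> : b2 = b1 * a2 / a1 by rewrite -e; field.
      by field.
  rewrite yx in hy *; symmetry; apply: scale_unit => //.
  by rewrite divr_ge0.
have a10 : a1 = 0 by apply/eqP; rewrite eq_le ha h1.
have hb : 0 < b1 by lra.
have hb0 : b1 != 0 by rewrite gt_eqF.
have a20 : a2 = 0 by move: e; rewrite a10 mul0r => /esym/eqP; rewrite mulf_eq0 (negbTE hb0) /= => /eqP.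
have yx : y = (b2 / b1) *: x.
  rewrite yE xE a10 a20; apply: row3P; rewrite !mxE; by field.
rewrite yx in hy *; symmetry; apply: scale_unit => //.
by rewrite divr_ge0.
Qed.

Lemma lift_eq (p q x c z : pt R) (ax bx g d az bz s t : R) :
  x = ax *: p + bx *: q -> c = g *: p + d *: q -> z = az *: p + bz *: q ->
  ax = s * g + t * az -> bx = s * d + t * bz -> x = s *: c + t *: z.
Proof.
move=> -> -> -> -> ->; apply: row3P; rewrite !mxE; ring.
Qed.

Arguments mix_int hv {a w x s t}.
Arguments lift_eq {p q x c z ax bx g d az bz s t}.
Arguments par_eq {p q x y a1 b1 a2 b2}.
Arguments two_d {g d a1 b1 a2 b2 a3 b3}.
Arguments closure_of_hull {H c}.

Lemma final (hv : in_open_hemisphere A) (p q c x y z : pt R) (g d ax bx ay by' az bz : R) :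
  on_sphere c -> attractor_hull A c -> c = g *: p + d *: q -> 0 < g -> d < 0 ->
  0 <= ax -> 0 <= bx -> 0 <= ay -> 0 <= by' -> 0 <= az -> 0 <= bz ->
  0 < ax + bx -> 0 < ay + by' -> 0 < az + bz ->
  x = ax *: p + bx *: q -> y = ay *: p + by' *: q -> z = az *: p + bz *: q ->
  on_sphere x -> on_sphere y ->
  sph_interior (attractor_hull A) z ->
  sph_boundary (attractor_hull A) x -> sph_boundary (attractor_hull A) y -> x = y.
Proof.
move=> hc Hc cE hg hd hax hbx hay hby haz hbz nx ny nz xE yE zE hx hy hz [clx nix] [cly niy].
have clc := closure_of_hull hc Hc.
case: (two_d hg hd hax hbx hay hby haz hbz nx ny nz).
- move=> [s [t [hs ht e1 e2]]]; exfalso; apply: nix.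
  exact: (mix_int hv clc hz hx hs ht (lift_eq xE cE zE e1 e2)).
- move=> [s [t [hs ht e1 e2]]]; exfalso; apply: niy.
  exact: (mix_int hv clc hz hy hs ht (lift_eq yE cE zE e1 e2)).
- move=> [s [t [hs ht e1 e2]]]; exfalso; apply: nix.
  exact: (mix_int hv cly hz hx hs ht (lift_eq xE yE zE e1 e2)).
- move=> [[s [t [hs ht e1 e2]]] | e].
    exfalso; apply: niy.
    exact: (mix_int hv clx hz hy hs ht (lift_eq yE xE zE e1 e2)).
  exact: (par_eq hax hbx hay hby nx xE yE hx hy e).
Qed.

End Aux.
Arguments hull_pt {R k A} hv {j}.
Arguments plane {R p q n c}.
Arguments final {R k A} hv {p q c x y z g d ax bx ay by' az bz}.
Arguments dotC {R}.
Arguments dot_eq0 {R v}.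


Lemma on_sphereN (R : realType) (v : pt R) : on_sphere v -> on_sphere (- v).
Proof. by rewrite /on_sphere dotNl dotNr opprK. Qed.

Lemma pos_coord (R : realType) (p q x : pt R) (a b : R) : on_sphere x -> x = a *: p + b *: q ->
  0 <= a -> 0 <= b -> 0 < a + b.
Proof.
move=> hx xE ha hb; case: (ltrP 0 (a + b)) => // h.
have a0 : a = 0 by lra.
have b0 : b = 0 by lra.
move: hx; rewrite /on_sphere xE a0 b0 !scale0r addr0 dot0l => /eqP.
by rewrite eq_sym oner_eq0.
Qed.

Arguments pos_coord {R p q x a b}.
Arguments on_sphereN {R v}.

Theorem mainTheorem14 (R : realType) (I : finType) (ends : I -> pt R * pt R)
    (k : nat) (P : 'I_k -> pt R) (f : I -> 'I_k) (A : 'I_k -> pt R) (a : I) :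
  spherical_diagram ends ->
  orientation ends P f ->
  attractor P A ->
  (exists x, garc (ends a).1 (ends a).2 x /\ sph_interior (attractor_hull A) x) ->
  forall x y : pt R,
    garc (ends a).1 (ends a).2 x -> sph_boundary (attractor_hull A) x ->
    garc (ends a).1 (ends a).2 y -> sph_boundary (attractor_hull A) y ->
    x = y.
Proof.
move=> [_ hok _ _] [hPs hPinj hPanti hor] [hAinj hAP hAanti] [z [gz iz]] x y gx bdx gy bdy.
have [j0 hj0] : exists j0, A j0 = P (f a) \/ A j0 = - P (f a).
  have hg : forall j, exists i, (A j == P i) || (A j == - P i).
    by move=> j; have [i [->|->]] := hAP j; exists i; rewrite eqxx ?orbT.
  pose g j := xchoose (hg j).
  have gP : forall j, (A j == P (g j)) || (A j == - P (g j)) by move=> j; exact: (xchooseP (hg j)).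
  have ginj : injective g.
    move=> j1 j2 e; apply: hAinj.
    have := gP j1; have := gP j2; rewrite e.
    case/orP => /eqP h2; case/orP => /eqP h1; rewrite h1 h2 //.
    - by exfalso; apply: (hAanti j1 j2); rewrite h1 h2 ?opprK.
    - by exfalso; apply: (hAanti j1 j2); rewrite h1 h2 ?opprK.
  have [g' _ gK] := injF_bij ginj.
  exists (g' (f a)); have := gP (g' (f a)); rewrite gK.
  by case/orP => /eqP ->; [left | right].
case: (classic (in_open_hemisphere A)) => hv; last first.
  move: bdx => [[hx _] nix]; exfalso; apply: nix; split => //; split.
    by split => // /hv.
  exists 1; split => // w hw _; split => // /hv //.
set p := (ends a).1; set q := (ends a).2.
have [hp hq pneq pnmq] := hok a.
have [[n [nn0 nP np nq]] ngc ngmc] := hor a.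
rewrite -/p -/q in np nq ngc ngmc.
set c := A j0.
have hc : on_sphere c by rewrite /c; case: hj0 => ->; [apply: hPs | apply/on_sphereN/hPs].
have Hc : attractor_hull A c := hull_pt hv hc.
have ngc' : ~ garc p q c by rewrite /c; case: hj0 => ->.
have ngmc' : ~ garc p q (- c) by rewrite /c; case: hj0 => ->; rewrite ?opprK.
have nc : dot n c = 0 by rewrite /c; case: hj0 => ->; rewrite ?dotNr nP ?oppr0.
have pq2 : dot p q ^+ 2 < 1.
  have d1 : 0 < dist2 p q.
    rewrite lt_def dist2_ge0 andbT; apply/eqP => /dot_eq0/eqP.
    by rewrite subr_eq0 => /eqP.
  have d2 : 0 < dot (p + q) (p + q).
    rewrite lt_def dot_ge0 andbT; apply/eqP => /dot_eq0/eqP.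
    by rewrite addr_eq0 => /eqP.
  move: d1 d2; rewrite dist2E !dotDl !dotDr hp hq (dotC q p) => d1 d2.
  nra.
have [g [d cE]] := plane hp hq pq2 nn0 np nq nc.
have [hx [ax [bx [hax hbx xE]]]] := gx.
have [hy [ay [by' [hay hby yE]]]] := gy.
have [hz [az [bz [haz hbz zE]]]] := gz.
have nx := pos_coord hx xE hax hbx.
have ny := pos_coord hy yE hay hby.
have nz := pos_coord hz zE haz hbz.
have sg : (0 < g /\ d < 0) \/ (g < 0 /\ 0 < d).
  case: (ltrP 0 g) => hg.
    case: (ltrP d 0) => hd; first by left.
    by exfalso; apply: ngc'; split => //; exists g, d; split => //; apply: ltW.
  case: (ltrP 0 d) => hd.
    case: (ltrP g 0) => hg'; first by right.
    by exfalso; apply: ngc'; split => //; exists g, d; split => //; apply: ltW.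
  exfalso; apply: ngmc'; split; first exact: on_sphereN.
  exists (- g), (- d); split; rewrite ?oppr_ge0 //.
  by rewrite cE opprD -!scaleNr.
case: sg => [[hg hd] | [hg hd]].
  exact: (final hv hc Hc cE hg hd hax hbx hay hby haz hbz nx ny nz xE yE zE hx hy iz bdx bdy).
rewrite addrC in nx; rewrite addrC in ny; rewrite addrC in nz.
rewrite addrC in cE; rewrite addrC in xE; rewrite addrC in yE; rewrite addrC in zE.
exact: (final hv hc Hc cE hd hg hbx hax hby hay hbz haz nx ny nz xE yE zE hx hy iz bdx bdy).
Qed.
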